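(* For a $(w,d)$ sliding-window erasure channel with topological entropy $h_{ch}$, the zero-error capacity satisfies $1-\frac{d}{w}-h_{ch}\le C_0\le 1-\frac{d}{w}$.
   Context: Logarithms are to base $q=|\mathcal{X}|\ge2$, $\mathcal{X}$ the input alphabet. Integers $w\ge1$, $0\le d\le w$. The $(w,d)$ sliding-window erasure channel: a noise word $v(0:n-1)\in\{0,1\}^n$ is admissible if for some initial pattern $v(-w:-1)\in\{0,1\}^w$ every $w$ consecutive entries of $(v(-w),\dots,v(n-1))$ contain at most $d$ ones; output $y(t)=x(t)$ if $v(t)=0$ and $y(t)=*$ (a symbol not in $\mathcal{X}$) if $v(t)=1$. Its state graph has vertices the binary words of length $w$ with at most $d$ ones and an edge from $(b_1,\dots,b_w)$ to $(b_2,\dots,b_w,b)$ whenever the latter has at most $d$ ones; $h_{ch}=\log\lambda$ where $\lambda$ is the Perron eigenvalue of its $0/1$ adjacency matrix. A zero-error code of length $n$ is a set $\mathcal{F}\subseteq\mathcal{X}^n$ such that no output word can be produced by two distinct codewords under admissible noise; $C_0=\sup_n\sup_{\mathcal{F}}\log|\mathcal{F}|/n$. *)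

(* Defs.v *)
From Stdlib Require Import Reals Lra Lia List Bool Arith.
Import ListNotations.
Open Scope R_scope.

Definition ones (l : list bool) : nat := length (filter (fun b => b) l).

Fixpoint all_words (w : nat) : list (list bool) :=
  match w with
  | O => [[]]
  | S w' => flat_map (fun l => [false :: l; true :: l]) (all_words w')
  end.

Definition states (w d : nat) : list (list bool) :=
  filter (fun l => Nat.leb (ones l) d) (all_words w).

(** 0/1 adjacency entry: edge from (b1,...,bw) to (b2,...,bw,b).
    Used only for x, y among [states w d] (so the target has at most d ones). *)
Definition adj (x y : list bool) : R :=
  if list_eq_dec bool_dec y (tl x ++ [false]) then 1
  else if list_eq_dec bool_dec y (tl x ++ [true]) then 1 else 0.

Definition sumR {A : Type} (l : list A) (f : A -> R) : R :=
  fold_right (fun a acc => f a + acc) 0 l.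

(** (a + i b) is a (complex) eigenvalue of the adjacency matrix of the state
    graph, with complex eigenvector u + i v (u, v real vectors indexed by the
    vertices). *)
Definition is_eigenvalue (w d : nat) (a b : R) : Prop :=
  exists u v : list bool -> R,
    (exists x, In x (states w d) /\ (u x <> 0 \/ v x <> 0)) /\
    forall x, In x (states w d) ->
      sumR (states w d) (fun y => adj x y * u y) = a * u x - b * v x /\
      sumR (states w d) (fun y => adj x y * v y) = b * u x + a * v x.

(** Perron eigenvalue: the nonnegative real eigenvalue equal to the spectral
    radius (every complex eigenvalue has modulus at most lam). *)
Definition is_perron (w d : nat) (lam : R) : Prop :=
  0 <= lam /\ is_eigenvalue w d lam 0 /\
  forall a b, is_eigenvalue w d a b -> sqrt (a * a + b * b) <= lam.

Definition logq (q : nat) (x : R) : R := ln x / ln (INR q).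

Definition admissible (w d n : nat) (v : list bool) : Prop :=
  length v = n /\
  exists init : list bool, length init = w /\
    forall i, (i <= n)%nat -> (ones (firstn w (skipn i (init ++ v))) <= d)%nat.

(** Channel output: None stands for the erasure symbol *. *)
Definition output (x : list nat) (v : list bool) : list (option nat) :=
  map (fun p : nat * bool => if snd p then None else Some (fst p)) (combine x v).

Definition zero_error_code (q w d n : nat) (F : list (list nat)) : Prop :=
  NoDup F /\
  (forall c, In c F -> length c = n /\ Forall (fun a => (a < q)%nat) c) /\
  (forall c1 c2 v1 v2, In c1 F -> In c2 F ->
      admissible w d n v1 -> admissible w d n v2 ->
      output c1 v1 = output c2 v2 -> c1 = c2).

Definition rates (q w d : nat) (r : R) : Prop :=
  exists (n : nat) (F : list (list nat)),
    (1 <= n)%nat /\ (1 <= length F)%nat /\ zero_error_code q w d n F /\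
    r = logq q (INR (length F)) / INR n.

(* Main.v *)
Require Import Defs.
From Stdlib Require Import Reals Lra Lia List Bool Arith ZArith Classical.
Import ListNotations.
Open Scope R_scope.
From mathcomp Require all_boot all_order all_algebra Rstruct.

Set Warnings "-notation-overridden,-ambiguous-paths".
Module LA.
Import all_boot all_order all_algebra Rstruct.
Import GRing.Theory Num.Theory Order.TTheory.

Section LinAlg.
Local Open Scope ring_scope.

Lemma sumR_big (l : list (list bool)) (g : list bool -> R) :
  sumR l g = \sum_(i < size l) g (nth [::] l i).
Proof.
have -> : sumR l g = \sum_(x <- l) g x.
  elim: l => [|a l IH] /=; first by rewrite big_nil.
  by rewrite big_cons IH.
by rewrite (big_nth [::]) big_mkord.
Qed.

Lemma In_inP (x : list bool) (l : list (list bool)) : In x l -> x \in l.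
Proof.
elim: l => [|a l IH] //= [->|H]; rewrite in_cons ?eqxx //.
by rewrite IH ?orbT.
Qed.

Lemma In_inP' (x : list bool) (l : list (list bool)) : x \in l -> In x l.
Proof.
elim: l => [|a l IH] //=; rewrite in_cons => /orP [/eqP ->|H]; auto.
Qed.

Lemma NoDup_uniq (l : list (list bool)) : NoDup l -> uniq l.
Proof.
elim: l => [|a l IH] //= H; inversion H; subst.
apply/andP; split; last by apply: IH.
by apply/negP => /In_inP'.
Qed.

Lemma kernel_or_bound (st : list (list bool)) (Hnd : uniq st)
  (B : list bool -> list bool -> R) (r : R) :
  (exists f : list bool -> R, (exists x, In x st /\ f x <> 0) /\
     forall x, In x st -> sumR st (fun y => B x y * f y) = r * f x)
  \/ (exists K : R, forall f : list bool -> R,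
      Rle (sumR st (fun x => Rabs (f x)))
        (K * sumR st (fun x => Rabs (sumR st (fun y => B x y * f y) - r * f x)))).
Proof.
set S := size st.
pose s (i : 'I_S) := nth [::] st i.
pose M : 'M[R]_S := \matrix_(i, j) (B (s i) (s j) - (if i == j then r else 0)).
have Mrow : forall (z : 'rV[R]_S) i, (z *m M^T) 0 i =
    \sum_j B (s i) (s j) * z 0 j - r * z 0 i.
  move=> z i; rewrite !mxE.
  under eq_bigr => j _ do rewrite !mxE mulrBr.
  rewrite sumrB; congr (_ - _); first by apply: eq_bigr => j _; rewrite mulrC.
  rewrite (bigD1 i) //= eqxx big1 ?addr0; first by rewrite mulrC.
  by move=> j /negbTE; rewrite eq_sym => ->; rewrite mulr0.
have sinj : forall i j, s i = s j -> i = j.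
  move=> i j Hij; apply: val_inj => /=; apply/eqP.
  by rewrite -(nth_uniq [::] (ltn_ord i) (ltn_ord j) Hnd); apply/eqP.
have inst : forall x, In x st -> exists i, s i = x.
  move=> x /In_inP xin.
  have hi : (index x st < S)%N by rewrite index_mem.
  by exists (Ordinal hi); rewrite /s /= nth_index.
case: (boolP (\det M^T == 0)) => [/det0P [v vn0 vM] | detn0].
  left.
  pose f y := \sum_(j < S) (if s j == y then v 0 j else 0).
  have fs : forall i, f (s i) = v 0 i.
    move=> i; rewrite /f (bigD1 i) //= eqxx big1 ?addr0 //.
    move=> j /negbTE ji; case: eqP => // /sinj eji.
    by rewrite eji eqxx in ji.
  exists f; split.
    case/boolP: [exists i, v 0 i != 0] => [/existsP [i vi] | /existsPn H].
      exists (s i); split; first by apply/In_inP'; rewrite /s mem_nth.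
      by rewrite fs; apply/eqP.
    exfalso; move/eqP: vn0; apply; apply/matrixP => a b.
    by rewrite ord1 !mxE; move: (H b); rewrite negbK => /eqP.
  move=> x /inst [i <-]; rewrite sumR_big fs.
  have := Mrow v i; rewrite vM mxE => /esym /eqP; rewrite subr_eq0 => /eqP <-.
  by apply: eq_bigr => j _; rewrite fs.
right.
have uM : M^T \in unitmx by rewrite unitmxE unitfE.
pose N := invmx M^T.
pose K0 := \sum_i \sum_j `|N i j|.
have NK : forall i j, `|N i j| <= K0.
  move=> i j; rewrite /K0 (bigD1 i) //= (bigD1 j) //= -addrA lerDl.
  by rewrite addr_ge0 // sumr_ge0 // => k _; rewrite ?sumr_ge0.
exists (S%:R * K0) => f.
pose z : 'rV[R]_S := \row_j f (s j).
pose y := z *m M^T.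
have zy : z = y *m N by rewrite /y /N mulmxK.
have L : sumR st (fun x => Rabs (f x)) = \sum_j `|z 0 j|.
  by rewrite sumR_big; apply: eq_bigr => j _; rewrite mxE.
have Rr : sumR st (fun x => Rabs (sumR st (fun y => B x y * f y) - r * f x))
   = \sum_i `|y 0 i|.
  rewrite sumR_big; apply: eq_bigr => i _; rewrite /y Mrow sumR_big mxE.
  congr (`| _ - _ * _|); apply: eq_bigr => j _; by rewrite mxE.
rewrite L Rr; apply/RleP.
have H1 : forall j, `|z 0 j| <= K0 * \sum_i `|y 0 i|.
  move=> j; rewrite zy mxE (le_trans (ler_norm_sum _ _ _)) //.
  rewrite mulr_sumr; apply: ler_sum => i _; rewrite normrM mulrC.
  by rewrite ler_wpM2r.
apply: (le_trans (ler_sum _ (fun j _ => H1 j))).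
rewrite sumr_const card_ord.
have -> : forall x : R, x *+ S = S%:R * x by move=> x; rewrite mulr_natl.
by rewrite mulrA.
Qed.
End LinAlg.
End LA.

Lemma all_words_In n l : In l (all_words n) <-> length l = n.
Proof.
revert l; induction n as [|n IH]; intros l; simpl.
- split; [intros [<-|[]]; reflexivity| destruct l; simpl; [auto|discriminate]].
- rewrite in_flat_map; split.
  + intros [l' [Hl' Hin]]. apply IH in Hl'. simpl in Hin.
    destruct Hin as [<-|[<-|[]]]; simpl; lia.
  + intros H; destruct l as [|b l]; [discriminate|]. simpl in H.
    exists l; split; [apply IH; lia|]. destruct b; simpl; auto.
Qed.

Lemma NoDup_all_words n : NoDup (all_words n).
Proof.
induction n as [|n IH]; simpl.
- constructor; [simpl; auto|constructor].
- induction IH as [|a L Ha HL IHL]; simpl; [constructor|].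
  constructor.
  + intros H. apply in_inv in H. destruct H as [H|H]; [discriminate|].
    apply in_flat_map in H. destruct H as [l [Hl Hin]].
    destruct Hin as [Hin|[Hin|[]]]; [injection Hin; intros; subst; auto|discriminate].
  + constructor.
    * intros H. apply in_flat_map in H. destruct H as [l [Hl Hin]].
      destruct Hin as [Hin|[Hin|[]]]; [discriminate|injection Hin; intros; subst; auto].
    * exact IHL.
Qed.

Lemma states_In w d x : In x (states w d) <-> length x = w /\ (ones x <= d)%nat.
Proof.
unfold states; rewrite filter_In, all_words_In, Nat.leb_le; tauto.
Qed.

Lemma NoDup_states w d : NoDup (states w d).
Proof. apply NoDup_filter, NoDup_all_words. Qed.

Definition step (x : list bool) (b : bool) := tl x ++ [b].

Fixpoint valid (d : nat) (x v : list bool) : bool :=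
  match v with
  | [] => true
  | b :: v' => Nat.leb (ones (step x b)) d && valid d (step x b) v'
  end.

Lemma length_step x b : (1 <= length x)%nat -> length (step x b) = length x.
Proof. unfold step; destruct x; simpl; rewrite ?length_app; simpl; lia. Qed.

Lemma ones_app l1 l2 : ones (l1 ++ l2) = (ones l1 + ones l2)%nat.
Proof. unfold ones; rewrite filter_app, length_app; reflexivity. Qed.

Lemma valid_windows w d (hw : (1 <= w)%nat) v : forall x, length x = w ->
  (forall i, (i <= length v)%nat -> (ones (firstn w (skipn i (x ++ v))) <= d)%nat) ->
  valid d x v = true.
Proof.
induction v as [|b v IH]; intros x Hx H; simpl; [reflexivity|].
destruct x as [|a x]; [simpl in Hx; lia|].
assert (Hs : step (a :: x) b = firstn w (skipn 1 ((a :: x) ++ b :: v))).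
{ simpl. unfold step; simpl. rewrite firstn_app.
  simpl in Hx. replace (w - length x)%nat with 1%nat by lia.
  rewrite (firstn_all2 (n:=w) x) by lia. reflexivity. }
apply andb_true_intro; split.
- apply Nat.leb_le. rewrite Hs. apply H. simpl; lia.
- apply IH. rewrite length_step; [assumption|simpl; lia].
  intros i Hi. specialize (H (S i)). simpl in H.
  unfold step; simpl. rewrite <- app_assoc. simpl. apply H. lia.
Qed.

Lemma adm_valid w d n v (hw : (1 <= w)%nat) : admissible w d n v ->
  exists s, In s (states w d) /\ valid d s v = true.
Proof.
intros [Hlen [init [Hi H]]]. exists init. split.
- apply states_In. split; auto. specialize (H 0%nat (Nat.le_0_l _)).
  simpl in H. rewrite firstn_app, firstn_all2 in H by lia.
  rewrite ones_app in H. lia.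
- apply (valid_windows w); auto. intros i Hle; apply H; lia.
Qed.

Fixpoint shift (x v : list bool) : list bool :=
  match v with [] => x | b :: v' => shift (step x b) v' end.

Lemma valid_app d x u v : valid d x (u ++ v) = valid d x u && valid d (shift x u) v.
Proof.
revert x; induction u as [|b u IH]; intros x; simpl; [reflexivity|].
rewrite IH, andb_assoc; reflexivity.
Qed.

Lemma shift_skipn u : forall x, (length u < length x)%nat ->
  shift x u = skipn (length u) x ++ u.
Proof.
induction u as [|b u IH]; intros x Hx; simpl.
- rewrite app_nil_r; reflexivity.
- destruct x as [|a x]; simpl in Hx; [lia|].
  rewrite IH by (unfold step; simpl; rewrite length_app; simpl; lia).
  unfold step; simpl. rewrite skipn_app.
  replace (length u - length x)%nat with 0%nat by lia. simpl.
  rewrite <- app_assoc; reflexivity.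
Qed.

Lemma shift_full x u : (1 <= length x)%nat -> length u = length x -> shift x u = u.
Proof.
intros H1 H. destruct u as [|b u]; simpl in *; [lia|].
destruct x as [|a x]; simpl in *; [lia|].
unfold step; simpl. rewrite shift_skipn by (rewrite length_app; simpl; lia).
rewrite skipn_app. rewrite skipn_all2 by lia.
replace (length u - length x)%nat with 0%nat by lia. reflexivity.
Qed.

Lemma valid_last d u : forall x, u <> [] -> valid d x u = true -> (ones (shift x u) <= d)%nat.
Proof.
induction u as [|b u IH]; intros x Hu H; [congruence|].
simpl in H. apply andb_prop in H. destruct H as [H1 H2].
destruct u as [|b' u].
- simpl. apply Nat.leb_le; assumption.
- simpl shift. apply IH; [discriminate|assumption].
Qed.

Lemma valid_ones w d (hw : (1 <= w)%nat) k : forall v x, length x = w ->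
  length v = (k * w)%nat -> valid d x v = true -> (ones v <= k * d)%nat.
Proof.
induction k as [|k IH]; intros v x Hx Hv H.
- destruct v; [unfold ones; simpl; lia|simpl in Hv; lia].
- rewrite <- (firstn_skipn w v) in H |- *.
  rewrite valid_app in H. apply andb_prop in H. destruct H as [H1 H2].
  assert (Hu : length (firstn w v) = w) by (rewrite length_firstn; lia).
  rewrite shift_full in H2 by lia.
  rewrite ones_app.
  assert (ones (firstn w v) <= d)%nat.
  { rewrite <- (shift_full x (firstn w v)) by lia.
    apply valid_last; auto. intros E; rewrite E in Hu; simpl in Hu; lia. }
  assert (ones (skipn w v) <= k * d)%nat.
  { apply (IH _ (firstn w v)); auto. rewrite length_skipn; lia. }
  lia.
Qed.

Lemma ones_repeat_false n : ones (repeat false n) = 0%nat.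
Proof. induction n; simpl; auto. Qed.

Lemma valid_zero w d (hw : (1 <= w)%nat) n :
  valid d (repeat false w) (repeat false n) = true.
Proof.
induction n as [|n IH]; simpl; [reflexivity|].
assert (E : step (repeat false w) false = repeat false w).
{ destruct w as [|w]; [lia|]. unfold step; simpl.
  rewrite <- repeat_cons. reflexivity. }
rewrite E, ones_repeat_false, IH. reflexivity.
Qed.

Definition cnt d x n := length (filter (valid d x) (all_words n)).

Lemma filter_and_len (c : bool) (P : list bool -> bool) L :
  length (filter (fun l => c && P l) L) = if c then length (filter P L) else 0%nat.
Proof.
destruct c; simpl.
- reflexivity.
- induction L; simpl; auto.
Qed.

Lemma cnt_S d x n : cnt d x (S n) =
  ((if Nat.leb (ones (step x false)) d then cnt d (step x false) n else 0) +
   (if Nat.leb (ones (step x true)) d then cnt d (step x true) n else 0))%nat.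
Proof.
unfold cnt. simpl.
rewrite <- (filter_and_len (Nat.leb (ones (step x false)) d) (valid d (step x false))).
rewrite <- (filter_and_len (Nat.leb (ones (step x true)) d) (valid d (step x true))).
induction (all_words n) as [|l L IH]; simpl; [reflexivity|].
destruct (Nat.leb (ones (step x false)) d && valid d (step x false) l);
destruct (Nat.leb (ones (step x true)) d && valid d (step x true) l); simpl;
rewrite IH; lia.
Qed.

Section Sums.
Context {A : Type}.

Lemma sumR_ext (l : list A) f g : (forall x, In x l -> f x = g x) -> sumR l f = sumR l g.
Proof.
induction l as [|a l IH]; intros H; simpl; [reflexivity|].
rewrite H, IH; auto with datatypes.
Qed.

Lemma sumR_plus (l : list A) f g : sumR l (fun x => f x + g x) = sumR l f + sumR l g.
Proof. induction l; simpl; [lra|rewrite IHl; lra]. Qed.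

Lemma sumR_minus (l : list A) f g : sumR l (fun x => f x - g x) = sumR l f - sumR l g.
Proof. induction l; simpl; [lra|rewrite IHl; lra]. Qed.

Lemma sumR_scal (l : list A) c f : sumR l (fun x => c * f x) = c * sumR l f.
Proof. induction l; simpl; [lra|rewrite IHl; lra]. Qed.

Lemma sumR_le (l : list A) f g : (forall x, In x l -> f x <= g x) -> sumR l f <= sumR l g.
Proof.
induction l as [|a l IH]; intros H; simpl; [lra|].
assert (f a <= g a) by auto with datatypes.
assert (sumR l f <= sumR l g) by (apply IH; auto with datatypes). lra.
Qed.

Lemma sumR_nonneg (l : list A) f : (forall x, In x l -> 0 <= f x) -> 0 <= sumR l f.
Proof.
intros H. assert (E : sumR l (fun _ => 0) = 0) by (clear H; induction l; simpl; lra).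
rewrite <- E. apply sumR_le; auto.
Qed.

Lemma sumR_term (l : list A) f a : (forall x, In x l -> 0 <= f x) -> In a l -> f a <= sumR l f.
Proof.
induction l as [|b l IH]; intros H Ha; simpl; [destruct Ha|].
destruct Ha as [<-|Ha].
- assert (0 <= sumR l f) by (apply sumR_nonneg; auto with datatypes). lra.
- assert (0 <= f b) by auto with datatypes.
  assert (f a <= sumR l f) by (apply IH; auto with datatypes). lra.
Qed.

Lemma sumR_abs (l : list A) f : Rabs (sumR l f) <= sumR l (fun x => Rabs (f x)).
Proof.
induction l; simpl. rewrite Rabs_R0; lra.
eapply Rle_trans; [apply Rabs_triang|]. lra.
Qed.

Lemma sumR_single (eq_dec : forall x y : A, {x = y} + {x <> y}) (l : list A) a g :
  NoDup l -> sumR l (fun y => if eq_dec y a then g y else 0) =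
  if in_dec eq_dec a l then g a else 0.
Proof.
induction l as [|b l IH]; intros Hnd; simpl; [reflexivity|].
inversion Hnd; subst. rewrite IH by assumption.
destruct (eq_dec b a) as [->|Hba].
- destruct (in_dec eq_dec a l); [contradiction|]. lra.
- destruct (in_dec eq_dec a l); lra.
Qed.
End Sums.

Fixpoint sN (N : nat) (g : nat -> R) : R :=
  match N with O => 0 | S N => sN N g + g N end.

Lemma sumR_sN {A} (l : list A) N F :
  sumR l (fun x => sN N (fun n => F n x)) = sN N (fun n => sumR l (F n)).
Proof.
induction N; simpl.
- induction l; simpl; auto; lra.
- rewrite sumR_plus, IHN; reflexivity.
Qed.

Lemma sN_ext N f g : (forall n, (n < N)%nat -> f n = g n) -> sN N f = sN N g.
Proof. induction N; intros H; simpl; auto. rewrite IHN, H; auto. Qed.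

Lemma sN_scal N c f : sN N (fun n => c * f n) = c * sN N f.
Proof. induction N; simpl; [lra|rewrite IHN; lra]. Qed.

Lemma sumR_adj w d (hw : (1 <= w)%nat) x g : length x = w ->
  sumR (states w d) (fun y => adj x y * g y) =
  (if Nat.leb (ones (step x false)) d then g (step x false) else 0) +
  (if Nat.leb (ones (step x true)) d then g (step x true) else 0).
Proof.
intros Hx.
assert (Hne : step x false <> step x true).
{ unfold step; intros E. apply app_inj_tail in E. destruct E; discriminate. }
rewrite (sumR_ext _ _ (fun y =>
   (if list_eq_dec bool_dec y (step x false) then g y else 0) +
   (if list_eq_dec bool_dec y (step x true) then g y else 0))).
2:{ intros y _. unfold adj. fold (step x false). fold (step x true).
    destruct (list_eq_dec bool_dec y (step x false)) as [->|H1];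
    destruct (list_eq_dec bool_dec (step x false) (step x true)); try congruence.
    - destruct (list_eq_dec bool_dec (step x false) (step x true)); [congruence|lra].
    - destruct (list_eq_dec bool_dec y (step x true)); lra. }
rewrite sumR_plus, !sumR_single by apply NoDup_states.
assert (Hl : forall b, length (step x b) = w) by (intros; rewrite length_step; lia).
f_equal.
- destruct (in_dec (list_eq_dec bool_dec) (step x false) (states w d)) as [Hi|Hi];
  destruct (Nat.leb (ones (step x false)) d) eqn:E; auto.
  + apply states_In in Hi. apply Nat.leb_gt in E. lia.
  + exfalso; apply Hi, states_In. split; auto. apply Nat.leb_le; auto.
- destruct (in_dec (list_eq_dec bool_dec) (step x true) (states w d)) as [Hi|Hi];
  destruct (Nat.leb (ones (step x true)) d) eqn:E; auto.
  + apply states_In in Hi. apply Nat.leb_gt in E. lia.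
  + exfalso; apply Hi, states_In. split; auto. apply Nat.leb_le; auto.
Qed.

Lemma W_rec w d (hw : (1 <= w)%nat) x n : length x = w ->
  INR (cnt d x (S n)) = sumR (states w d) (fun y => adj x y * INR (cnt d y n)).
Proof.
intros Hx. rewrite (sumR_adj w d hw x (fun y => INR (cnt d y n)) Hx), cnt_S, plus_INR.
destruct (Nat.leb (ones (step x false)) d); destruct (Nat.leb (ones (step x true)) d);
simpl; reflexivity.
Qed.

Lemma ln_le' x y : 0 < x -> x <= y -> ln x <= ln y.
Proof. intros Hx [H|H]; [left; apply ln_increasing; auto|subst; lra]. Qed.

Lemma le_of_ln x y : 0 < x -> 0 < y -> ln x <= ln y -> x <= y.
Proof.
intros Hx Hy H. destruct (Rle_dec x y) as [|Hn]; auto.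
assert (ln y < ln x) by (apply ln_increasing; lra). lra.
Qed.

Lemma nat_gt (x : R) : exists n : nat, x < INR n.
Proof.
destruct (archimed x) as [H1 _].
destruct (Z_lt_le_dec (up x) 0) as [Hz|Hz].
- exists 0%nat. simpl. apply IZR_lt in Hz. lra.
- exists (Z.to_nat (up x)). rewrite INR_IZR_INZ, Z2Nat.id by assumption. lra.
Qed.

Lemma bernoulli (b : R) (k : nat) : 0 <= b -> 1 + INR k * b <= (1 + b) ^ k.
Proof.
intros Hb. induction k as [|k IH]; [simpl; lra|].
rewrite S_INR. change ((1 + b) ^ S k) with ((1 + b) * (1 + b) ^ k).
assert (0 <= INR k) by apply pos_INR.
assert (0 <= INR k * b * b) by (apply Rmult_le_pos; [apply Rmult_le_pos|]; lra).
nra.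
Qed.



Lemma sN_ge N (a : nat -> R) : (forall n, 1 <= a n) -> INR N <= sN N a.
Proof.
intros H; induction N; [simpl; lra|]. rewrite S_INR. simpl. specialize (H N). lra.
Qed.

Lemma sN_nonneg N (a : nat -> R) : (forall n, 0 <= a n) -> 0 <= sN N a.
Proof. intros H; induction N; simpl; [lra|]. specialize (H N). lra. Qed.

Lemma sN_term N (a : nat -> R) j : (forall n, 0 <= a n) -> (j < N)%nat -> a j <= sN N a.
Proof.
intros H; induction N; intros Hj; [lia|]. simpl.
destruct (Nat.eq_dec j N) as [->|Hne].
- assert (0 <= sN N a) by (apply sN_nonneg; auto). lra.
- assert (a j <= sN N a) by (apply IHN; lia). specialize (H N). lra.
Qed.

Lemma growth_contra (a : nat -> R) (c Mx rho : R) (N0 : nat) :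
  (forall n, 0 <= a n) -> 0 < c ->
  (forall N, (N0 <= N)%nat -> c * sN N a <= a N) ->
  1 <= sN N0 a ->
  (forall N, a N <= Mx * rho ^ N) -> 1 <= rho -> rho < 1 + c -> False.
Proof.
intros Ha Hc Hg HP Hup Hr1 Hr2.
assert (Hk : forall k, (1 + c) ^ k <= sN (N0 + k) a).
{ induction k as [|k IH].
  - rewrite Nat.add_0_r; simpl; lra.
  - replace (N0 + S k)%nat with (S (N0 + k)) by lia. simpl.
    specialize (Hg (N0 + k)%nat ltac:(lia)).
    assert (0 < (1 + c) ^ k) by (apply pow_lt; lra). nra. }
set (beta := (1 + c) / rho).
assert (Hb : 1 < beta).
{ unfold beta. apply (Rmult_lt_reg_r rho); [lra|].
  unfold Rdiv; rewrite Rmult_assoc, Rinv_l by lra. lra. }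
assert (Hbk : forall k, c * beta ^ k <= Mx * rho ^ N0).
{ intros k. specialize (Hk k). specialize (Hg (N0 + k)%nat ltac:(lia)).
  specialize (Hup (N0 + k)%nat). rewrite pow_add in Hup.
  unfold beta, Rdiv. rewrite Rpow_mult_distr, pow_inv.
  assert (0 < rho ^ k) by (apply pow_lt; lra).
  assert (c * (1 + c) ^ k <= Mx * rho ^ N0 * rho ^ k) by nra.
  apply (Rmult_le_reg_r (rho ^ k)); [assumption|].
  replace (c * ((1 + c) ^ k * / rho ^ k) * rho ^ k) with (c * (1 + c) ^ k)
    by (field; lra). lra. }
destruct (nat_gt ((Mx * rho ^ N0) / (c * (beta - 1)))) as [k Hkk].
specialize (Hbk k).
assert (HB := bernoulli (beta - 1) k ltac:(lra)).
replace (1 + (beta - 1)) with beta in HB by ring.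
assert (Hcb : 0 < c * (beta - 1)) by (apply Rmult_lt_0_compat; lra).
apply (Rmult_lt_compat_r (c * (beta - 1))) in Hkk; [|assumption].
unfold Rdiv in Hkk. rewrite Rmult_assoc, Rinv_l in Hkk by lra.
assert (0 <= INR k) by apply pos_INR.
nra.
Qed.

Section Spectral.
Variable st : list (list bool).
Variable B : list bool -> list bool -> R.
Variable W : nat -> list bool -> R.
Variable lam : R.
Hypothesis HB : forall x y, 0 <= B x y.
Hypothesis HW0 : forall n x, 0 <= W n x.
Hypothesis HW1 : forall x, In x st -> W 0%nat x = 1.
Hypothesis HW : forall n x, In x st -> W (S n) x = sumR st (fun y => B x y * W n y).
Hypothesis HT : forall n, 1 <= sumR st (W n).
Hypothesis Hlam : forall r (f : list bool -> R), 0 <= r -> (exists x, In x st /\ f x <> 0) ->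
  (forall x, In x st -> sumR st (fun y => B x y * f y) = r * f x) -> r <= lam.
Hypothesis Hker : forall r : R,
  (exists f : list bool -> R, (exists x, In x st /\ f x <> 0) /\
     forall x, In x st -> sumR st (fun y => B x y * f y) = r * f x)
  \/ (exists K : R, forall f : list bool -> R,
      sumR st (fun x => Rabs (f x)) <=
        K * sumR st (fun x => Rabs (sumR st (fun y => B x y * f y) - r * f x))).

Let T n := sumR st (W n).

Lemma W_sub m : forall n x, In x st -> W (n + m)%nat x <= T m * W n x.
Proof.
induction n as [|n IH]; intros x Hx.
- simpl. rewrite HW1 by assumption. rewrite Rmult_1_r.
  apply sumR_term; auto.
- simpl. rewrite !HW by assumption. rewrite <- sumR_scal.
  apply sumR_le. intros y Hy. specialize (IH y Hy). specialize (HB x y). nra.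
Qed.

Lemma T_sub n m : T (n + m)%nat <= T n * T m.
Proof.
unfold T at 1. apply Rle_trans with (sumR st (fun x => T m * W n x)).
- apply sumR_le. intros x Hx. apply W_sub; auto.
- rewrite sumR_scal. unfold T; lra.
Qed.

Lemma T_pos n : 0 < T n.
Proof. specialize (HT n). unfold T; lra. Qed.

Lemma T_pow m k j : T (k * m + j)%nat <= T m ^ k * T j.
Proof.
induction k as [|k IH]; simpl.
- lra.
- replace (m + k * m + j)%nat with (m + (k * m + j))%nat by lia.
  eapply Rle_trans; [apply T_sub|].
  assert (0 < T m) by apply T_pos. nra.
Qed.

Lemma spectral_main : forall eps, 0 < eps ->
  exists m, (1 <= m)%nat /\ ln (T m) / INR m < ln lam + eps.
Proof.
set (E := fun y => forall m, (1 <= m)%nat -> y <= ln (T m) / INR m).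
assert (HEb : bound E).
{ exists (ln (T 1%nat) / INR 1). intros y Hy. apply Hy; lia. }
assert (HE0 : E 0).
{ intros m Hm. apply Rmult_le_pos.
  - rewrite <- ln_1. apply ln_le'; [lra|apply HT].
  - left; apply Rinv_0_lt_compat, lt_0_INR; lia. }
destruct (completeness E HEb (ex_intro _ 0 HE0)) as [l [Hub Hlub]].
assert (Hl0 : 0 <= l) by (apply Hub; exact HE0).
assert (Hlm : forall m, (1 <= m)%nat -> l <= ln (T m) / INR m).
{ intros m Hm. apply Hlub. intros y Hy. apply Hy; auto. }
assert (Hlt : forall eps, 0 < eps -> exists m, (1 <= m)%nat /\ ln (T m) / INR m < l + eps).
{ intros eps Heps. destruct (classic (exists m, (1 <= m)%nat /\ ln (T m) / INR m < l + eps)) as [H|H]; auto.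
  exfalso. assert (E (l + eps)).
  { intros m Hm. destruct (Rle_dec (l + eps) (ln (T m) / INR m)) as [|Hn]; auto.
    exfalso; apply H; exists m; split; auto; lra. }
  specialize (Hub _ H0). lra. }
enough (Hll : l <= ln lam).
{ intros eps Heps. destruct (Hlt eps Heps) as [m [Hm1 Hm2]]. exists m; split; auto; lra. }
set (r := exp l).
assert (Hr1 : 1 <= r) by (unfold r; pose proof (exp_ineq1_le l); lra).
assert (Hrl : ln r = l) by (unfold r; apply ln_exp).
enough (Hrlam : r <= lam).
{ rewrite <- Hrl. apply ln_le'; lra. }
assert (Hrpow : forall n, r ^ n <= T n).
{ intros [|n].
  - simpl. apply HT.
  - apply le_of_ln; [apply pow_lt; lra|apply T_pos|].
    rewrite ln_pow by lra. rewrite Hrl.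
    specialize (Hlm (S n) ltac:(lia)).
    assert (0 < INR (S n)) by (apply lt_0_INR; lia).
    replace (ln (T (S n))) with (INR (S n) * (ln (T (S n)) / INR (S n))) by (field; lra).
    apply Rmult_le_compat_l; lra. }
destruct (Hker r) as [[f [Hf1 Hf2]]|[K HK]].
{ apply (Hlam r f); auto; lra. }
exfalso.
assert (Hr0 : 0 < r) by lra.
assert (Hrn : forall n, 0 < r ^ n) by (intros; apply pow_lt; lra).
set (a := fun n => T n / r ^ n).
assert (Ha1 : forall n, 1 <= a n).
{ intros n. unfold a. specialize (Hrn n). specialize (Hrpow n).
  apply (Rmult_le_reg_r (r ^ n)); [lra|]. unfold Rdiv. rewrite Rmult_assoc, Rinv_l; lra. }
assert (HT0 : T 0%nat = sumR st (fun _ => 1)).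
{ unfold T. apply sumR_ext. intros; apply HW1; auto. }
assert (HKpos : 0 < K).
{ specialize (HK (fun _ => 1)).
  assert (Z : 0 <= sumR st (fun x => Rabs (sumR st (fun y => B x y * 1) - r * 1)))
    by (apply sumR_nonneg; intros; apply Rabs_pos).
  rewrite (sumR_ext _ (fun x => Rabs 1) (fun _ => 1)) in HK
    by (intros; rewrite Rabs_R1; reflexivity).
  rewrite <- HT0 in HK. specialize (HT 0%nat). fold (T 0%nat) in HT.
  destruct (Rle_dec K 0) as [HK0|]; [|lra].
  assert (K * sumR st (fun x => Rabs (sumR st (fun y => B x y * 1) - r * 1)) <= 0) by nra.
  lra. }
set (s := fun N x => sN N (fun n => W n x / r ^ n)).
assert (Hs_nonneg : forall N x, 0 <= s N x).
{ intros N x. apply sN_nonneg. intros n. unfold Rdiv. apply Rmult_le_pos; auto.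
  left; apply Rinv_0_lt_compat; auto. }
assert (HsL : forall N, sumR st (fun x => Rabs (s N x)) = sN N a).
{ intros N. rewrite (sumR_ext _ _ (s N)) by (intros; apply Rabs_right; apply Rle_ge; auto).
  unfold s. rewrite sumR_sN. apply sN_ext. intros n _.
  unfold a, T, Rdiv. rewrite (Rmult_comm (sumR st (W n))), <- (sumR_scal _ (/ r ^ n)).
  apply sumR_ext; intros; ring. }
assert (HAs : forall N x, In x st ->
  sumR st (fun y => B x y * s N y) = sN N (fun n => W (S n) x / r ^ n)).
{ intros N x Hx. unfold s.
  rewrite (sumR_ext _ _ (fun y => sN N (fun n => B x y * (W n y / r ^ n))))
    by (intros; rewrite sN_scal; reflexivity).
  rewrite sumR_sN. apply sN_ext. intros n _.
  rewrite HW by assumption. unfold Rdiv.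
  rewrite (Rmult_comm (sumR st (fun y => B x y * W n y))), <- (sumR_scal _ (/ r ^ n)).
  apply sumR_ext; intros; ring. }
assert (Htele : forall N x, sN N (fun n => W (S n) x / r ^ n) - r * s N x
   = r * (W N x / r ^ N - W 0%nat x)).
{ intros N x. unfold s. induction N as [|N IH].
  - simpl. field.
  - simpl sN. simpl (r ^ S N).
    assert (r ^ N <> 0) by (specialize (Hrn N); lra).
    replace (sN N (fun n => W (S n) x / r ^ n) + W (S N) x / r ^ N -
       r * (sN N (fun n => W n x / r ^ n) + W N x / r ^ N))
      with ((sN N (fun n => W (S n) x / r ^ n) - r * sN N (fun n => W n x / r ^ n))
             + W (S N) x / r ^ N - r * (W N x / r ^ N)) by ring.
    rewrite IH. field. split; lra. }
assert (HPN : forall N, sN N a <= K * (r * (a N + T 0%nat))).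
{ intros N. rewrite <- HsL. eapply Rle_trans; [apply HK|].
  apply Rmult_le_compat_l; [lra|].
  apply Rle_trans with (sumR st (fun x => r * (W N x / r ^ N + W 0%nat x))).
  - apply sumR_le. intros x Hx. rewrite HAs, Htele by assumption.
    assert (0 <= W N x / r ^ N)
      by (unfold Rdiv; apply Rmult_le_pos; [auto|left; apply Rinv_0_lt_compat; auto]).
    specialize (HW0 0%nat x).
    apply Rabs_le. split; nra.
  - rewrite sumR_scal, sumR_plus. unfold a, T. unfold Rdiv at 2.
    rewrite (Rmult_comm _ (/ r ^ N)), <- sumR_scal.
    right. f_equal. f_equal. apply sumR_ext; intros; unfold Rdiv; ring. }
set (Q := K * r).
assert (HQ : 0 < Q) by (unfold Q; nra).
set (c := / (2 * Q)).
assert (Hc : 0 < c) by (unfold c; apply Rinv_0_lt_compat; lra).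
set (rho := 1 + c / 2).
destruct (Hlt (ln rho)) as [m [Hm1 Hm2]].
{ rewrite <- ln_1. apply ln_increasing; unfold rho; lra. }
assert (HTm : T m <= (r * rho) ^ m).
{ apply le_of_ln; [apply T_pos|apply pow_lt; unfold rho; nra|].
  rewrite ln_pow by (unfold rho; nra). rewrite ln_mult by (unfold rho; lra).
  rewrite Hrl. assert (0 < INR m) by (apply lt_0_INR; lia).
  replace (ln (T m)) with (INR m * (ln (T m) / INR m)) by (field; lra).
  apply Rmult_le_compat_l; lra. }
set (Mx := sN m a).
assert (Hup : forall N, a N <= Mx * rho ^ N).
{ intros N.
  assert (HN : N = ((N / m) * m + N mod m)%nat)
    by (rewrite (Nat.div_mod_eq N m) at 1; lia).
  set (k := (N / m)%nat) in *. set (j := (N mod m)%nat) in *.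
  assert (Hj : (j < m)%nat) by (apply Nat.mod_upper_bound; lia).
  assert (Haj : a j <= Mx) by (apply sN_term; auto; intros; specialize (Ha1 n); lra).
  assert (Hrho1 : 1 <= rho) by (unfold rho; lra).
  assert (H1 : T N <= (r * rho) ^ (m * k) * T j).
  { rewrite HN. eapply Rle_trans; [apply T_pow|].
    rewrite pow_mult. apply Rmult_le_compat_r; [left; apply T_pos|].
    apply pow_incr; split; [left; apply T_pos|assumption]. }
  unfold a at 1. rewrite HN. rewrite HN in H1.
  rewrite Rpow_mult_distr in H1. rewrite pow_add.
  assert (0 < r ^ (k * m)) by auto. assert (0 < r ^ j) by auto.
  replace (m * k)%nat with (k * m)%nat in H1 by lia.
  apply Rle_trans with (rho ^ (k * m) * a j).
  - unfold a. apply (Rmult_le_reg_r (r ^ (k * m) * r ^ j)); [nra|].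
    unfold Rdiv. field_simplify; [|lra|lra].
    replace (rho ^ (k * m) * T j * r ^ (k * m)) with (r ^ (k * m) * rho ^ (k * m) * T j) by ring.
    exact H1.
  - rewrite pow_add. assert (1 <= rho ^ j) by (apply pow_R1_Rle; auto).
    assert (0 < rho ^ (k * m)) by (apply pow_lt; lra).
    assert (0 <= a j) by (specialize (Ha1 j); lra).
    assert (0 <= Mx) by lra.
    assert (rho ^ (k * m) * a j <= rho ^ (k * m) * Mx) by (apply Rmult_le_compat_l; lra).
    assert (0 <= Mx * rho ^ (k * m)) by (apply Rmult_le_pos; lra).
    assert (Mx * rho ^ (k * m) * 1 <= Mx * rho ^ (k * m) * rho ^ j)
      by (apply Rmult_le_compat_l; lra).
    lra. }
destruct (nat_gt (2 * Q * T 0%nat + 1)) as [N0 HN0].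
apply (growth_contra a c Mx rho N0).
- intros n; specialize (Ha1 n); lra.
- exact Hc.
- intros N HN. specialize (HPN N).
  assert (HP : INR N0 <= sN N a).
  { eapply Rle_trans; [apply le_INR; exact HN|]. apply sN_ge; auto. }
  fold Q in HPN. unfold c.
  assert (sN N a <= 2 * Q * a N).
  { assert (EQ : K * (r * (a N + T 0%nat)) = Q * a N + Q * T 0%nat) by (unfold Q; ring).
    lra. }
  apply (Rmult_le_reg_l (2 * Q)); [lra|]. rewrite <- Rmult_assoc, Rinv_r, Rmult_1_l; lra.
- eapply Rle_trans; [|apply sN_ge; auto]. assert (1 <= INR N0); [|lra].
  specialize (HT 0%nat). fold (T 0%nat) in HT. assert (0 <= Q * T 0%nat) by nra. lra.
- exact Hup.
- unfold rho; lra.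
- unfold rho; lra.
Qed.
End Spectral.

Fixpoint qwords (q n : nat) : list (list nat) :=
  match n with
  | O => [[]]
  | S n => flat_map (fun l => map (fun a => a :: l) (seq 0 q)) (qwords q n)
  end.

Lemma qwords_In q n c : In c (qwords q n) <-> length c = n /\ Forall (fun a => (a < q)%nat) c.
Proof.
revert c; induction n as [|n IH]; intros c; simpl.
- split; [intros [<-|[]]; auto|intros [H _]; destruct c; [auto|discriminate]].
- rewrite in_flat_map. split.
  + intros [l [Hl Hc]]. apply in_map_iff in Hc. destruct Hc as [a [<- Ha]].
    apply in_seq in Ha. apply IH in Hl. destruct Hl as [H1 H2].
    simpl; split; [lia|constructor; [lia|auto]].
  + intros [H1 H2]. destruct c as [|a c]; [discriminate|].
    inversion H2; subst. exists c. split.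
    * apply IH; split; [simpl in H1; lia|auto].
    * apply in_map_iff. exists a. split; [reflexivity|apply in_seq; lia].
Qed.

Lemma NoDup_flat_map {A B} (g : A -> list B) L : NoDup L -> (forall l, NoDup (g l)) ->
  (forall l1 l2 x, In x (g l1) -> In x (g l2) -> l1 = l2) -> NoDup (flat_map g L).
Proof.
intros HL Hg Hd. induction HL as [|l L Hl HL IH]; simpl; [constructor|].
apply NoDup_app; auto.
intros x Hx Hx'. apply in_flat_map in Hx'. destruct Hx' as [l' [Hl' Hx']].
assert (l = l') by (apply (Hd l l' x); auto). subst. contradiction.
Qed.

Lemma NoDup_qwords q n : NoDup (qwords q n).
Proof.
induction n as [|n IH]; simpl.
- constructor; [simpl; auto|constructor].
- apply NoDup_flat_map; auto.
  + intros l. apply NoDup_map_NoDup_ForallPairs; [|apply seq_NoDup].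
    intros x y _ _ E. injection E; auto.
  + intros l1 l2 x H1 H2. apply in_map_iff in H1, H2.
    destruct H1 as [a [<- _]]. destruct H2 as [b [E _]]. injection E; auto.
Qed.

Lemma length_flat_map_const {A B} (g : A -> list B) k L :
  (forall l, length (g l) = k) -> length (flat_map g L) = (k * length L)%nat.
Proof.
intros H; induction L; simpl; [lia|]. rewrite length_app, H, IHL. lia.
Qed.

Lemma length_qwords q n : length (qwords q n) = (q ^ n)%nat.
Proof.
induction n as [|n IH]; simpl; auto.
rewrite (length_flat_map_const _ q), IH; [lia|].
intros; rewrite length_map, length_seq; reflexivity.
Qed.

Fixpoint agree (c1 c2 : list nat) (v : list bool) : bool :=
  match c1, c2, v with
  | a :: c1', b :: c2', e :: v' => (e || Nat.eqb a b) && agree c1' c2' v'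
  | _, _, _ => true
  end.

Lemma agree_sym c1 c2 v : agree c1 c2 v = agree c2 c1 v.
Proof.
revert c2 v; induction c1 as [|a c1 IH]; intros [|b c2] [|e v]; simpl; auto.
rewrite IH, Nat.eqb_sym; reflexivity.
Qed.

Lemma agree_refl c v : agree c c v = true.
Proof.
revert v; induction c as [|a c IH]; intros [|e v]; simpl; auto.
rewrite IH, Nat.eqb_refl, orb_true_r; reflexivity.
Qed.

Lemma count_eq_seq q a : (a < q)%nat ->
  length (filter (fun b => Nat.eqb a b) (seq 0 q)) = 1%nat.
Proof.
intros Ha. replace q with (a + 1 + (q - a - 1))%nat by lia.
rewrite !seq_app, !filter_app, !length_app. simpl.
rewrite Nat.eqb_refl.
rewrite (filter_ext_in _ (fun _ => false) (seq 0 a)).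
2:{ intros b Hb. apply in_seq in Hb. apply Nat.eqb_neq. lia. }
rewrite (filter_ext_in _ (fun _ => false) (seq (0 + (a + 1)) _)).
2:{ intros b Hb. apply in_seq in Hb. apply Nat.eqb_neq. lia. }
rewrite !filter_false. simpl. lia.
Qed.

Lemma len_filter_map1 (s : list nat) (R : nat -> bool) (Q : list nat -> bool) l :
  length (filter (fun c => match c with b :: l0 => R b && Q l0 | [] => false end)
   (map (fun b => b :: l) s)) = if Q l then length (filter R s) else 0%nat.
Proof.
destruct (Q l) eqn:EQ; induction s as [|b s IHs]; simpl; auto.
- rewrite EQ, andb_true_r. destruct (R b); simpl; rewrite IHs; auto.
- rewrite EQ, andb_false_r. exact IHs.
Qed.

Lemma len_filter_flat (L : list (list nat)) (s : list nat) (R : nat -> bool)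
  (Q : list nat -> bool) :
  length (filter (fun c => match c with b :: l => R b && Q l | [] => false end)
     (flat_map (fun l => map (fun b => b :: l) s) L)) =
  (length (filter R s) * length (filter Q L))%nat.
Proof.
induction L as [|l L IH]; simpl; [lia|].
rewrite filter_app, length_app, IH.
rewrite len_filter_map1. destruct (Q l); simpl; lia.
Qed.

Lemma count_agree q n : forall f v, In f (qwords q n) -> length v = n ->
  length (filter (fun c => agree f c v) (qwords q n)) = (q ^ ones v)%nat.
Proof.
induction n as [|n IH]; intros f v Hf Hv.
- destruct v; [|discriminate]. simpl. destruct Hf as [<-|[]]. reflexivity.
- destruct v as [|e v]; [discriminate|]. simpl in Hv.
  apply qwords_In in Hf. destruct Hf as [Hf1 Hf2].
  destruct f as [|a f]; [discriminate|]. inversion Hf2; subst.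
  simpl qwords.
  rewrite (filter_ext_in _ (fun c => match c with
     | b :: l => (e || Nat.eqb a b) && agree f l v | [] => false end)).
  2:{ intros c Hc. apply in_flat_map in Hc. destruct Hc as [l [_ Hc]].
      apply in_map_iff in Hc. destruct Hc as [b [<- _]]. reflexivity. }
  rewrite len_filter_flat, IH; [|apply qwords_In; split; auto; simpl in Hf1; lia|lia].
  destruct e; simpl.
  + assert (E : forall l : list nat, filter (fun _ => true) l = l)
      by (induction l; simpl; congruence).
    rewrite E, length_seq. reflexivity.
  + rewrite count_eq_seq by assumption. unfold ones; simpl. lia.
Qed.

Lemma len_filter_or {A} (P Q : A -> bool) L :
  (length (filter (fun c => P c || Q c) L) <= length (filter P L) + length (filter Q L))%nat.
Proof. induction L as [|a L IH]; simpl; [lia|]. destruct (P a); destruct (Q a); simpl; lia. Qed.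

Lemma len_filter_exists {A X} (g : X -> A -> bool) (Xs : list X) (L : list A) :
  (length (filter (fun c => existsb (fun x => g x c) Xs) L) <=
   list_sum (map (fun x => length (filter (g x) L)) Xs))%nat.
Proof.
induction Xs as [|x Xs IH]; simpl.
- rewrite filter_false. simpl; lia.
- eapply Nat.le_trans; [apply (len_filter_or (g x) (fun c => existsb (fun x => g x c) Xs))|].
  lia.
Qed.

Lemma list_sum_bound {X} (h : X -> nat) b Xs : (forall x, In x Xs -> (h x <= b)%nat) ->
  (list_sum (map h Xs) <= length Xs * b)%nat.
Proof.
induction Xs as [|x Xs IH]; intros H; simpl; [lia|].
assert (h x <= b)%nat by auto with datatypes.
assert (list_sum (map h Xs) <= length Xs * b)%nat by (apply IH; auto with datatypes). lia.
Qed.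

Lemma filter_all {A} (P : A -> bool) L : (forall c, In c L -> P c = true) -> filter P L = L.
Proof.
induction L as [|a L IH]; intros H; simpl; auto.
rewrite H by auto with datatypes. rewrite IH; auto with datatypes.
Qed.

Section Greedy.
Variable conf : list nat -> list nat -> bool.
Hypothesis conf_sym : forall a b, conf a b = conf b a.
Hypothesis conf_refl : forall a, conf a a = true.

Fixpoint greedy (L F : list (list nat)) : list (list nat) :=
  match L with
  | [] => F
  | c :: L' => greedy L' (if existsb (conf c) F then F else c :: F)
  end.

Definition pairwise (F : list (list nat)) :=
  forall f1 f2, In f1 F -> In f2 F -> f1 <> f2 -> conf f1 f2 = false.

Lemma greedy_spec L : forall F, NoDup L -> (forall f, In f F -> ~ In f L) -> NoDup F ->
  pairwise F ->
  NoDup (greedy L F) /\ pairwise (greedy L F) /\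
  (forall g, In g (greedy L F) -> In g F \/ In g L) /\
  (forall c, In c L -> existsb (conf c) (greedy L F) = true) /\
  (forall f, In f F -> In f (greedy L F)).
Proof.
induction L as [|c L IH]; intros F HL HFL HF HP; simpl.
- repeat split; auto; try (intros ? []).
- inversion HL as [|c' L' HcL HL']; subst.
  destruct (existsb (conf c) F) eqn:Ex.
  + destruct (IH F HL' ltac:(intros f Hf Hf'; apply (HFL f Hf); right; auto) HF HP)
      as [G1 [G2 [G3 [G4 G5]]]].
    repeat split; auto.
    * intros g Hg. destruct (G3 g Hg); auto.
    * intros c0 [<-|Hc0]; auto.
      apply existsb_exists in Ex. destruct Ex as [f [Hf Hcf]].
      apply existsb_exists. exists f; split; auto.
  + assert (HcF : ~ In c F) by (intros H; apply (HFL c H); left; auto).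
    destruct (IH (c :: F) HL').
    { intros f [<-|Hf] Hf'; [contradiction|]. apply (HFL f Hf); right; auto. }
    { constructor; auto. }
    { intros f1 f2 [E1|H1] [E2|H2] Hne.
      - subst; congruence.
      - subst f1. destruct (conf c f2) eqn:E; auto.
        assert (existsb (conf c) F = true) by (apply existsb_exists; exists f2; auto).
        congruence.
      - subst f2. rewrite conf_sym. destruct (conf c f1) eqn:E; auto.
        assert (existsb (conf c) F = true) by (apply existsb_exists; exists f1; auto).
        congruence.
      - apply HP; auto. }
    destruct H0 as [G2 [G3 [G4 G5]]].
    repeat split; auto.
    * intros g Hg. destruct (G3 g Hg) as [[<-|Hh]|Hh]; auto.
    * intros c0 [E0|Hc0]; auto. subst c0.
      apply existsb_exists. exists c; split; auto. apply G5; left; auto.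
    * intros f Hf. apply G5; right; auto.
Qed.

Lemma cover_count L F : (forall c, In c L -> existsb (conf c) F = true) ->
  (length L <= list_sum (map (fun f => length (filter (conf f) L)) F))%nat.
Proof.
intros H.
rewrite <- (filter_all (fun c => existsb (fun f => conf f c) F) L) at 1.
- apply len_filter_exists.
- intros c Hc. rewrite <- (H c Hc). clear H Hc.
  induction F as [|f F IHF]; simpl; auto. rewrite conf_sym, IHF; auto.
Qed.
End Greedy.

Lemma output_eq v1 : forall c1 c2 v2, length c1 = length v1 -> length c2 = length v2 ->
  length v1 = length v2 -> output c1 v1 = output c2 v2 -> v1 = v2 /\ agree c1 c2 v1 = true.
Proof.
induction v1 as [|e1 v1 IH]; intros c1 c2 v2 H1 H2 H3 H.
- destruct v2; [|discriminate]. destruct c1; destruct c2; simpl; auto.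
- destruct v2 as [|e2 v2]; [discriminate|].
  destruct c1 as [|a1 c1]; [discriminate|]. destruct c2 as [|a2 c2]; [discriminate|].
  simpl in *. unfold output in H. simpl in H. injection H as Hh Ht.
  destruct (IH c1 c2 v2 ltac:(lia) ltac:(lia) ltac:(lia) Ht) as [-> Ha].
  destruct e1; destruct e2; simpl in Hh; try discriminate.
  + split; auto.
  + injection Hh as ->. rewrite Nat.eqb_refl. split; auto.
Qed.

Lemma INR_list_sum {X} (h : X -> nat) Xs :
  INR (list_sum (map h Xs)) = sumR Xs (fun x => INR (h x)).
Proof. induction Xs; simpl; auto. rewrite plus_INR, IHXs; reflexivity. Qed.

Definition Vpat w d n := filter (fun v => existsb (fun s => valid d s v) (states w d)) (all_words n).

Lemma Vpat_count w d n : INR (length (Vpat w d n)) <= sumR (states w d) (fun s => INR (cnt d s n)).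
Proof.
unfold Vpat. rewrite <- INR_list_sum. apply le_INR.
apply (len_filter_exists (fun s v => valid d s v)).
Qed.

Lemma code_exists (q w d k : nat) (hw : (1 <= w)%nat) (hq : (1 <= q)%nat) :
  exists F, zero_error_code q w d (k * w) F /\
    (q ^ (k * w) <= length F * (length (Vpat w d (k * w)) * q ^ (k * d)))%nat.
Proof.
set (n := (k * w)%nat). set (V := Vpat w d n).
set (conf := fun c1 c2 => existsb (fun v => agree c1 c2 v) V).
assert (Hsym : forall a b, conf a b = conf b a).
{ intros a b. unfold conf. induction V as [|v V' IHV]; simpl; auto. rewrite agree_sym, IHV; auto. }
assert (HV0 : In (repeat false n) V).
{ unfold V, Vpat. apply filter_In. split.
  - apply all_words_In. apply repeat_length.
  - apply existsb_exists. exists (repeat false w). split.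
    + apply states_In. split; [apply repeat_length|rewrite ones_repeat_false; lia].
    + apply valid_zero; auto. }
assert (Hrefl : forall a, conf a a = true).
{ intros a. unfold conf. apply existsb_exists. exists (repeat false n); split; auto.
  apply agree_refl. }
set (L0 := qwords q n).
destruct (greedy_spec conf Hsym Hrefl L0 [] (NoDup_qwords q n) ltac:(intros f [])
  (NoDup_nil _) ltac:(intros f1 f2 [])) as [G1 [G2 [G3 [G4 _]]]].
set (F := greedy conf L0 []) in *.
exists F. split.
- split; [exact G1|split].
  + intros c Hc. destruct (G3 c Hc) as [[]|Hc']. apply qwords_In in Hc'. exact Hc'.
  + intros c1 c2 v1 v2 Hc1 Hc2 Hv1 Hv2 Ho.
    destruct (list_eq_dec Nat.eq_dec c1 c2) as [|Hne]; auto. exfalso.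
    assert (Hl1 : In c1 L0) by (destruct (G3 c1 Hc1) as [[]|]; auto).
    assert (Hl2 : In c2 L0) by (destruct (G3 c2 Hc2) as [[]|]; auto).
    apply qwords_In in Hl1, Hl2.
    assert (Lv1 : length v1 = n) by (destruct Hv1; auto).
    assert (Lv2 : length v2 = n) by (destruct Hv2; auto).
    destruct (output_eq v1 c1 c2 v2 ltac:(lia) ltac:(lia) ltac:(lia) Ho) as [<- Hag].
    assert (HinV : In v1 V).
    { unfold V, Vpat. apply filter_In. split; [apply all_words_In; auto|].
      destruct (adm_valid w d n v1 hw Hv1) as [s [Hs Hvs]].
      apply existsb_exists. exists s; auto. }
    assert (conf c1 c2 = true) by (apply existsb_exists; exists v1; auto).
    rewrite (G2 c1 c2 Hc1 Hc2 Hne) in H. discriminate.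
- assert (HL0 : length L0 = (q ^ n)%nat) by apply length_qwords.
  rewrite <- HL0.
  eapply Nat.le_trans; [apply (cover_count conf Hsym L0 F G4)|].
  apply list_sum_bound. intros f Hf.
  assert (Hfq : In f L0) by (destruct (G3 f Hf) as [[]|]; auto).
  eapply Nat.le_trans; [apply (len_filter_exists (fun v c => agree f c v) V L0)|].
  apply list_sum_bound. intros v Hv.
  unfold V, Vpat in Hv. apply filter_In in Hv. destruct Hv as [Hv1 Hv2].
  apply all_words_In in Hv1. apply existsb_exists in Hv2. destruct Hv2 as [s [Hs Hvs]].
  apply states_In in Hs. destruct Hs as [Hs1 Hs2].
  cbv beta. unfold L0. rewrite count_agree by auto.
  apply Nat.pow_le_mono_r; [lia|].
  apply (valid_ones w d hw k v s); auto.
Qed.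

Fixpoint outs (q : nat) (v : list bool) : list (list (option nat)) :=
  match v with
  | [] => [[]]
  | true :: v' => map (cons None) (outs q v')
  | false :: v' => flat_map (fun o => map (fun a => Some a :: o) (seq 0 q)) (outs q v')
  end.

Definition zeros (v : list bool) := length (filter negb v).

Lemma length_outs q v : length (outs q v) = (q ^ zeros v)%nat.
Proof.
induction v as [|[] v IH]; simpl; auto.
- rewrite length_map; auto.
- rewrite (length_flat_map_const _ q), IH; [unfold zeros; simpl; lia|].
  intros; rewrite length_map, length_seq; auto.
Qed.

Lemma output_in_outs q v : forall c, length c = length v -> Forall (fun a => (a < q)%nat) c ->
  In (output c v) (outs q v).
Proof.
induction v as [|e v IH]; intros c Hl Hf.
- destruct c; [left; reflexivity|discriminate].
- destruct c as [|a c]; [discriminate|]. inversion Hf; subst. simpl in Hl.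
  unfold output; simpl. fold (output c v).
  destruct e; simpl.
  + apply in_map. apply IH; auto.
  + apply in_flat_map. exists (output c v). split; [apply IH; auto|].
    apply in_map_iff. exists a; split; auto. apply in_seq; lia.
Qed.

Lemma ones_zeros v : (ones v + zeros v = length v)%nat.
Proof. induction v as [|[] v IH]; unfold ones, zeros in *; simpl; lia. Qed.

Lemma skipn_seq' i : forall a m, skipn i (seq a m) = seq (a + i) (m - i).
Proof.
induction i as [|i IH]; intros a m; simpl.
- rewrite Nat.add_0_r, Nat.sub_0_r; reflexivity.
- destruct m; simpl; [reflexivity|]. rewrite IH. f_equal; lia.
Qed.

Lemma firstn_seq' k : forall a m, firstn k (seq a m) = seq a (Nat.min k m).
Proof.
induction k as [|k IH]; intros a m; simpl; [reflexivity|].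
destruct m; simpl; [reflexivity|]. rewrite IH; reflexivity.
Qed.

Lemma ones_map (p : nat -> bool) l : ones (map p l) = length (filter p l).
Proof. induction l; unfold ones in *; simpl; auto. destruct (p a); simpl; auto. Qed.

Section Periodic.
Variables w d : nat.
Hypothesis hw : (1 <= w)%nat.
Hypothesis hd : (d <= w)%nat.
Definition pp (k : nat) : bool := Nat.ltb (k mod w) d.
Definition cres a m := length (filter pp (seq a m)).

Lemma cres_S a m : cres a (S m) = ((if pp a then 1 else 0) + cres (S a) m)%nat.
Proof. unfold cres; simpl. destruct (pp a); reflexivity. Qed.

Lemma cres_app a m1 m2 : cres a (m1 + m2) = (cres a m1 + cres (a + m1) m2)%nat.
Proof. unfold cres. rewrite seq_app, filter_app, length_app. reflexivity. Qed.

Lemma pp_w k : pp (k + w) = pp k.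
Proof.
unfold pp. f_equal. replace (k + w)%nat with (k + 1 * w)%nat by lia.
apply Nat.Div0.mod_add.
Qed.

Lemma cres_lt n : (n <= w)%nat -> cres 0 n = Nat.min n d.
Proof.
induction n as [|n IH]; intros Hn; [reflexivity|].
replace (S n) with (n + 1)%nat by lia. rewrite cres_app, IH by lia.
unfold cres; simpl. unfold pp. rewrite Nat.mod_small by lia.
destruct (Nat.ltb n d) eqn:E; simpl.
- apply Nat.ltb_lt in E. lia.
- apply Nat.ltb_ge in E. lia.
Qed.

Lemma cres_window a : cres a w = d.
Proof.
induction a as [|a IH].
- rewrite cres_lt by lia. lia.
- assert (E : cres a (w + 1) = cres a (S w)) by (f_equal; lia).
  rewrite cres_app, (cres_S a w) in E.
  assert (E2 : cres (a + w) 1 = if pp a then 1%nat else 0%nat).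
  { unfold cres; simpl. rewrite pp_w. destruct (pp a); reflexivity. }
  rewrite E2 in E. destruct (pp a); lia.
Qed.

Lemma cres_shift a m : cres (a + w) m = cres a m.
Proof.
revert a; induction m as [|m IH]; intros a; [reflexivity|].
rewrite !cres_S, pp_w. replace (S (a + w)) with (S a + w)%nat by lia. rewrite IH. reflexivity.
Qed.

Lemma cres_le a m : (m <= w)%nat -> (cres a m <= d)%nat.
Proof.
intros H. rewrite <- (cres_window a). replace (cres a w) with (cres a (m + (w - m))) by (f_equal; lia).
rewrite cres_app. lia.
Qed.

Lemma cres_lower n : (n * d <= w * cres 0 n)%nat.
Proof.
induction n as [n IH] using lt_wf_ind.
destruct (Nat.le_gt_cases n w) as [Hn|Hn].
- rewrite cres_lt by lia. destruct (Nat.le_gt_cases n d).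
  + rewrite Nat.min_l by lia. nia.
  + rewrite Nat.min_r by lia. nia.
- replace n with (w + (n - w))%nat by lia. rewrite cres_app.
  replace (0 + w)%nat with (0 + w)%nat by reflexivity.
  rewrite cres_shift, cres_window.
  specialize (IH (n - w)%nat ltac:(lia)). nia.
Qed.
End Periodic.

Lemma upper_code q w d n F (hw : (1 <= w)%nat) (hd : (d <= w)%nat) :
  zero_error_code q w d n F ->
  exists z, (length F <= q ^ z)%nat /\ (z * w <= n * (w - d))%nat.
Proof.
intros [HND [HF Hz]].
set (vs := map (pp w d) (seq w n)).
assert (Hadm : admissible w d n vs).
{ split; [unfold vs; rewrite length_map, length_seq; reflexivity|].
  exists (map (pp w d) (seq 0 w)). split; [rewrite length_map, length_seq; reflexivity|].
  intros i Hi. unfold vs. rewrite <- map_app, <- seq_app.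
  rewrite skipn_map, firstn_map, ones_map, skipn_seq', firstn_seq'.
  apply cres_le; auto. lia. }
exists (zeros vs). split.
- rewrite <- length_outs.
  rewrite <- (length_map (fun c => output c vs) F).
  apply NoDup_incl_length.
  + apply NoDup_map_NoDup_ForallPairs; auto.
    intros x y Hx Hy E. apply (Hz x y vs vs); auto.
  + intros o Ho. apply in_map_iff in Ho. destruct Ho as [c [<- Hc]].
    destruct (HF c Hc) as [Hl Hq]. apply output_in_outs; auto.
    destruct Hadm; lia.
- assert (H1 := ones_zeros vs).
  assert (Hl : length vs = n) by (unfold vs; rewrite length_map, length_seq; reflexivity).
  assert (Ho : ones vs = cres w d 0 n).
  { unfold vs. rewrite ones_map. fold (cres w d w n).
    replace w with (0 + w)%nat at 2 by lia. apply cres_shift; auto. }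
  assert (H2 := cres_lower w d hw hd n).
  nia.
Qed.

Definition TT w d m := sumR (states w d) (fun s => INR (cnt d s m)).

Lemma cnt_zero_pos w d (hw : (1 <= w)%nat) n : (1 <= cnt d (repeat false w) n)%nat.
Proof.
unfold cnt. assert (H : In (repeat false n) (filter (valid d (repeat false w)) (all_words n))).
{ apply filter_In; split; [apply all_words_In, repeat_length|apply valid_zero; auto]. }
destruct (filter (valid d (repeat false w)) (all_words n)); [destruct H|simpl; lia].
Qed.

Lemma zero_state w d : In (repeat false w) (states w d).
Proof. apply states_In. split; [apply repeat_length|rewrite ones_repeat_false; lia]. Qed.

Lemma TT_ge1 w d (hw : (1 <= w)%nat) n : 1 <= TT w d n.
Proof.
unfold TT. eapply Rle_trans; [|apply (sumR_term _ _ (repeat false w))].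
- apply (le_INR 1). apply cnt_zero_pos; auto.
- intros; apply pos_INR.
- apply zero_state.
Qed.

Lemma spectral_inst w d lam (hw : (1 <= w)%nat) : is_perron w d lam ->
  forall eps, 0 < eps -> exists m, (1 <= m)%nat /\ ln (TT w d m) / INR m < ln lam + eps.
Proof.
intros [Hl0 [_ Hmax]].
apply (spectral_main (states w d) adj (fun n s => INR (cnt d s n)) lam).
- intros x y. unfold adj. destruct (list_eq_dec _ _ _); [lra|]. destruct (list_eq_dec _ _ _); lra.
- intros; apply pos_INR.
- intros x _. unfold cnt. simpl. reflexivity.
- intros n x Hx. apply states_In in Hx. apply W_rec; tauto.
- intros n. apply TT_ge1; auto.
- intros r f Hr Hnz Heig.
  assert (Hev : is_eigenvalue w d r 0).
  { exists f, (fun _ => 0). split.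
    - destruct Hnz as [x [Hx Hfx]]. exists x; auto.
    - intros x Hx. split.
      + rewrite Heig by auto. ring.
      + rewrite (sumR_ext _ _ (fun y => 0 * adj x y)) by (intros; ring).
        rewrite sumR_scal. ring. }
  specialize (Hmax r 0 Hev). rewrite Rmult_0_l, Rplus_0_r, sqrt_square in Hmax; auto.
- intros r. apply LA.kernel_or_bound. apply LA.NoDup_uniq, NoDup_states.
Qed.

Lemma TT_pow w d (hw : (1 <= w)%nat) m k j : TT w d (k * m + j) <= TT w d m ^ k * TT w d j.
Proof.
unfold TT. apply (T_pow (states w d) adj (fun n s => INR (cnt d s n))).
- intros x y. unfold adj. destruct (list_eq_dec _ _ _); [lra|]. destruct (list_eq_dec _ _ _); lra.
- intros; apply pos_INR.
- intros x _. unfold cnt. simpl. reflexivity.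
- intros n x Hx. apply states_In in Hx. apply W_rec; tauto.
- intros n. apply TT_ge1; auto.
Qed.

Lemma upper_rate q w d (hq : (2 <= q)%nat) (hw : (1 <= w)%nat) (hd : (d <= w)%nat) r :
  rates q w d r -> r <= 1 - INR d / INR w.
Proof.
intros [n [F [Hn [HF1 [HF Hr]]]]]. subst r.
destruct (upper_code q w d n F hw hd HF) as [z [Hz1 Hz2]].
assert (Hq : 1 < INR q) by (apply (lt_INR 1); lia).
assert (Hlq : 0 < ln (INR q)) by (rewrite <- ln_1; apply ln_increasing; lra).
assert (HnR : 0 < INR n) by (apply lt_0_INR; lia).
assert (HwR : 0 < INR w) by (apply lt_0_INR; lia).
assert (HFR : 1 <= INR (length F)) by (apply (le_INR 1); lia).
assert (Hlog : ln (INR (length F)) <= INR z * ln (INR q)).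
{ rewrite <- ln_pow by lra. apply ln_le'; [lra|].
  rewrite <- pow_INR. apply le_INR; auto. }
assert (Hzw : INR z * INR w <= INR n * (INR w - INR d)).
{ rewrite <- minus_INR by auto. rewrite <- !mult_INR. apply le_INR; auto. }
unfold logq.
assert (HA : ln (INR (length F)) / ln (INR q) <= INR z).
{ apply (Rmult_le_reg_r (ln (INR q))); auto. unfold Rdiv. rewrite Rmult_assoc, Rinv_l; lra. }
assert (HB : INR z / INR n <= 1 - INR d / INR w).
{ apply (Rmult_le_reg_r (INR n * INR w)); [nra|].
  replace (INR z / INR n * (INR n * INR w)) with (INR z * INR w) by (field; lra).
  replace ((1 - INR d / INR w) * (INR n * INR w)) with (INR n * (INR w - INR d)) by (field; lra).
  auto. }
eapply Rle_trans; [|exact HB].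
unfold Rdiv at 1 3. apply Rmult_le_compat_r; [left; apply Rinv_0_lt_compat; auto|auto].
Qed.

Lemma lower_rate q w d (hq : (2 <= q)%nat) (hw : (1 <= w)%nat) (hd : (d <= w)%nat) lam :
  is_perron w d lam -> forall delta, 0 < delta ->
  exists r, rates q w d r /\ 1 - INR d / INR w - logq q lam - delta < r.
Proof.
intros Hp delta Hdel.
assert (Hq : 1 < INR q) by (apply (lt_INR 1); lia).
assert (Hlq : 0 < ln (INR q)) by (rewrite <- ln_1; apply ln_increasing; lra).
assert (HwR : 0 < INR w) by (apply lt_0_INR; lia).
set (eps := delta * ln (INR q) / 3).
assert (Heps : 0 < eps) by (unfold eps; nra).
destruct (spectral_inst w d lam hw Hp eps Heps) as [m [Hm1 Hm2]].
assert (HmR : 0 < INR m) by (apply lt_0_INR; lia).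
destruct (nat_gt (ln (TT w d 0) / (eps * INR m * INR w))) as [k0 Hk0].
set (k := S k0).
assert (HkR : INR k0 < INR k) by (apply lt_INR; unfold k; lia).
assert (HkR0 : 0 < INR k) by (apply lt_0_INR; unfold k; lia).
set (M := (k * m)%nat). set (N := (M * w)%nat).
destruct (code_exists q w d M hw ltac:(lia)) as [F [HF Hcount]].
fold N in HF, Hcount.
set (V := length (Vpat w d N)) in *.
assert (HqN : (1 <= q ^ N)%nat) by (apply Nat.neq_0_lt_0, Nat.pow_nonzero; lia).
assert (HF1 : (1 <= length F)%nat) by (destruct (length F); simpl in Hcount; lia).
assert (HV1 : (1 <= V)%nat) by (destruct V; [rewrite Nat.mul_0_r in Hcount|]; lia).
assert (HNR : INR N = INR k * INR m * INR w) by (unfold N, M; rewrite !mult_INR; ring).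
assert (HMR : INR M = INR k * INR m) by (unfold M; rewrite mult_INR; ring).
assert (HN1 : (1 <= N)%nat) by (unfold N, M, k; nia).
assert (HNpos : 0 < INR N) by (apply lt_0_INR; lia).
exists (logq q (INR (length F)) / INR N). split.
{ exists N, F. split; [lia|split; [lia|split; [exact HF|reflexivity]]]. }
assert (HFR : 0 < INR (length F)) by (apply lt_0_INR; lia).
assert (HVR : 0 < INR V) by (apply lt_0_INR; lia).
assert (Hc : INR q ^ N <= INR (length F) * (INR V * INR q ^ (M * d))).
{ rewrite <- !pow_INR, <- !mult_INR. apply le_INR; auto. }
assert (Hc2 : INR N * ln (INR q) <= ln (INR (length F)) + ln (INR V) + INR M * INR d * ln (INR q)).
{ apply ln_le' in Hc; [|apply pow_lt; lra].
  rewrite !ln_mult in Hc by (try apply Rmult_lt_0_compat; try apply pow_lt; lra).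
  rewrite !ln_pow in Hc by lra. rewrite mult_INR in Hc. lra. }
assert (HVT : ln (INR V) <= ln (TT w d N)) by (apply ln_le'; [auto|apply Vpat_count]).
assert (HTN : TT w d N <= TT w d m ^ (k * w) * TT w d 0).
{ replace N with ((k * w) * m + 0)%nat by (unfold N, M; lia). apply TT_pow; auto. }
assert (HT1 : forall j, 0 < TT w d j) by (intros j; pose proof (TT_ge1 w d hw j); lra).
assert (HlnTN : ln (TT w d N) <= INR (k * w) * ln (TT w d m) + ln (TT w d 0)).
{ apply ln_le' in HTN; [|apply HT1]. rewrite ln_mult, ln_pow in HTN; auto.
  apply pow_lt; auto. }
assert (Hm3 : ln (TT w d m) < INR m * (ln lam + eps)).
{ apply (Rmult_lt_compat_l (INR m)) in Hm2; auto.
  replace (INR m * (ln (TT w d m) / INR m)) with (ln (TT w d m)) in Hm2 by (field; lra). lra. }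
assert (HT0 : ln (TT w d 0) < eps * INR N).
{ assert (0 < eps * INR m * INR w) by (apply Rmult_lt_0_compat; [nra|auto]).
  assert (H1 : ln (TT w d 0) / (eps * INR m * INR w) < INR k) by lra.
  apply (Rmult_lt_compat_r (eps * INR m * INR w)) in H1; auto.
  replace (ln (TT w d 0) / (eps * INR m * INR w) * (eps * INR m * INR w)) with (ln (TT w d 0))
    in H1 by (field; lra).
  rewrite HNR. lra. }
rewrite mult_INR in HlnTN.
assert (HkwR : 0 < INR k * INR w) by nra.
assert (HX : ln (INR (length F)) >= INR N * ln (INR q) - INR M * INR d * ln (INR q)
             - INR N * (ln lam + eps) - eps * INR N).
{ assert (INR k * INR w * ln (TT w d m) <= INR k * INR w * (INR m * (ln lam + eps)))
    by (apply Rmult_le_compat_l; lra).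
  rewrite HNR. rewrite HNR in HT0. nra. }
unfold logq.
set (X := ln (INR (length F))) in *.
set (Lq := ln (INR q)) in *.
set (Ll := ln lam).
assert (Hgoal : (1 - INR d / INR w - Ll / Lq - delta) * (INR N * Lq) < X).
{ replace ((1 - INR d / INR w - Ll / Lq - delta) * (INR N * Lq)) with
     (INR N * Lq - INR M * INR d * Lq - INR N * Ll - delta * INR N * Lq)
    by (rewrite HNR, HMR; field; lra).
  assert (Heq : eps = delta * Lq / 3) by (unfold eps, Lq; reflexivity).
  assert (0 < delta * INR N * Lq) by (repeat apply Rmult_lt_0_compat; auto).
  assert (2 * eps * INR N < delta * INR N * Lq) by (rewrite Heq; lra).
  fold Ll in HX. lra. }
apply (Rmult_lt_reg_r (INR N * Lq)); [nra|].
replace (X / Lq / INR N * (INR N * Lq)) with X by (field; lra).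
exact Hgoal.
Qed.

Theorem corollary1 (q w d : nat) (hq : (2 <= q)%nat) (hw : (1 <= w)%nat)
  (hd : (d <= w)%nat) (lam C0 : R) :
  is_perron w d lam ->
  is_lub (rates q w d) C0 ->
  1 - INR d / INR w - logq q lam <= C0 <= 1 - INR d / INR w.
Proof.
intros Hp [Hub Hleast]. split.
- destruct (Rle_dec (1 - INR d / INR w - logq q lam) C0) as [|Hn]; auto. exfalso.
  set (delta := 1 - INR d / INR w - logq q lam - C0).
  assert (Hd : 0 < delta) by (unfold delta; lra).
  destruct (lower_rate q w d hq hw hd lam Hp delta Hd) as [r [Hr1 Hr2]].
  specialize (Hub r Hr1). unfold delta in Hr2. lra.
- apply Hleast. intros r Hr. exact (upper_rate q w d hq hw hd r Hr).
Qed.
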